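(* Let $n \ge 3$ and let $\vec{x} = [x_t]_{t=0}^{n-1}$ and $\vec{q} = [q_t]_{t=0}^{n-1}$ be real-valued sequences, with discrete Fourier transforms $\vec{X}$ and $\vec{Q}$ defined by $$X_f = \frac{1}{\sqrt{n}} \sum_{t=0}^{n-1} x_t e^{-j 2\pi t f / n}, \qquad Q_f = \frac{1}{\sqrt{n}} \sum_{t=0}^{n-1} q_t e^{-j 2\pi t f / n}, \qquad f = 0, 1, \ldots, n-1,$$ where $j = \sqrt{-1}$. Let $D(\vec{x},\vec{q}) = \left(\sum_{t=0}^{n-1} |x_t - q_t|^2\right)^{1/2}$ be the Euclidean distance, and let $\epsilon > 0$. Let $k$ be an integer with $1 \le k < n/2$. If $D(\vec{x},\vec{q}) < \epsilon$, then $|X_0 - Q_0| < \epsilon$ and $$|X_f - Q_f| < \frac{\epsilon}{\sqrt{2}} \qquad \text{for all } f = 1, \ldots, k.$$ In particular, the axis-parallel box in the feature space of the first $k+1$ DFT coefficients that is centered at $(Q_0, Q_1, \ldots, Q_k)$ and has side $2\epsilon$ in the coordinate of $X_0$ and side $\sqrt{2}\,\epsilon$ in each real coordinate of $X_1, \ldots, X_k$ contains $(X_0, X_1, \ldots, X_k)$ for every $\vec{x}$ with $D(\vec{x},\vec{q}) < \epsilon$.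
   Context: The time sequences are real-valued. The real coordinates of a complex coefficient $X_f$ are its real and imaginary parts. For a real-valued sequence, $X_0$ is a real number. *)

(* Defs.v *)
From HB Require Import structures.
From mathcomp Require Import all_boot all_order all_algebra.
From mathcomp Require Import all_classical all_reals.
From mathcomp Require Import trigo.
From mathcomp Require Import complex.
Set Implicit Arguments. Unset Strict Implicit. Unset Printing Implicit Defensive.
Import Order.TTheory GRing.Theory Num.Theory.
Local Open Scope ring_scope.

Definition expj (R : realType) (theta : R) : R[i] := Complex (cos theta) (sin theta).

Definition dft (R : realType) (n : nat) (x : 'I_n -> R) (f : nat) : R[i] :=
  ((Num.sqrt (n%:R : R))^-1)%:C%C *
  \sum_(t < n) (x t)%:C%C * expj (- (2 * pi * (t%:R) * (f%:R) / (n%:R)) : R).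

Definition eucl_dist (R : realType) (n : nat) (x q : 'I_n -> R) : R :=
  Num.sqrt (\sum_(t < n) `|x t - q t| ^+ 2).

Definition cmod (R : realType) (z : R[i]) : R := Normc.normc z.

(* Main.v *)
Require Import Defs.
From HB Require Import structures.
From mathcomp Require Import all_boot all_order all_algebra.
From mathcomp Require Import all_classical all_reals.
From mathcomp Require Import trigo.
From mathcomp Require Import complex.
From mathcomp Require Import ring lra.
Import Order.TTheory GRing.Theory Num.Theory.
Local Open Scope ring_scope.
Lemma trig_sums (R:realType) (n:nat) (phi:R) : sin (phi/2) != 0 ->
  cos (n%:R*phi) = 1 -> sin(n%:R*phi) = 0 ->
  \sum_(t<n) cos(t%:R*phi) = 0 /\ \sum_(t<n) sin(t%:R*phi) = 0.
Proof.
move=> hs hc hsn; set h := phi/2.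
have ph : phi = h + h by rewrite /h; field.
have e1 : forall t : nat, cos(t%:R*phi) * (2 * sin h) =
   sin (t.+1%:R*phi - h) - sin (t%:R*phi - h).
  move=> t; have -> : t.+1%:R*phi - h = t%:R*phi + h by rewrite -addn1 natrD ph; ring.
  rewrite sinD sinB; ring.
have e2 : forall t : nat, sin(t%:R*phi) * (2 * sin h) =
   cos (t%:R*phi - h) - cos (t.+1%:R*phi - h).
  move=> t; have -> : t.+1%:R*phi - h = t%:R*phi + h by rewrite -addn1 natrD ph; ring.
  rewrite cosB cosD; ring.
have h2 : 2 * sin h != 0 by rewrite mulf_eq0 negb_or hs andbT; apply/eqP; lra.
split.
  apply: (mulIf h2); rewrite mul0r mulr_suml.
  under eq_bigr do rewrite e1.
  rewrite -(big_mkord xpredT (fun t => sin (t.+1%:R*phi - h) - sin (t%:R*phi - h))).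
  rewrite telescope_sumr // sinB hc hsn mul0r sub0r mul1r mul0r sub0r sinN opprK addNr //.
apply: (mulIf h2); rewrite mul0r mulr_suml.
under eq_bigr do rewrite e2.
rewrite -(big_mkord xpredT (fun t => cos (t%:R*phi - h) - cos (t.+1%:R*phi - h))).
under eq_bigr do rewrite -opprB.
rewrite sumrN telescope_sumr // cosB hc hsn mul0r addr0 mul1r mul0r sub0r.
by rewrite cosN subrr oppr0.
Qed.
Lemma bessel2 (R : realFieldType) n (d c s : 'I_n -> R) (N : R) : 0 < N ->
  \sum_t c t ^+ 2 = N -> \sum_t s t ^+ 2 = N -> \sum_t c t * s t = 0 ->
  (\sum_t d t * c t) ^+ 2 + (\sum_t d t * s t) ^+ 2 <= N * \sum_t d t ^+ 2.
Proof.
move=> N0 hc hs hcs.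
set A := \sum_t d t * c t; set B := \sum_t d t * s t.
have h0 : 0 <= \sum_t (d t - (A / N) * c t - (B / N) * s t) ^+ 2.
  by apply: sumr_ge0 => t _; apply: sqr_ge0.
have e : \sum_t (d t - (A / N) * c t - (B / N) * s t) ^+ 2 =
  \sum_t d t ^+ 2 + (-2 * (A/N)) * A + (-2 * (B/N)) * B + (A/N)^+2 * \sum_t c t ^+ 2
  + (B/N)^+2 * \sum_t s t ^+ 2 + (2 * (A/N) * (B/N)) * \sum_t c t * s t.
  set a := A / N; set b := B / N.
  rewrite /A /B !mulr_sumr -!big_split /=.
  by apply: eq_bigr => t _; ring.
rewrite e hc hs hcs in h0.
have E : (\sum_t d t ^+ 2 + (-2 * (A/N)) * A + (-2 * (B/N)) * B + (A/N)^+2 * N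
  + (B/N)^+2 * N + (2 * (A/N) * (B/N)) * 0) = (N * \sum_t d t ^+ 2 - (A^+2 + B^+2)) / N
  by field; rewrite gt_eqF.
rewrite E in h0.
rewrite pmulr_lge0 ?invr_gt0 // in h0.
by rewrite -subr_ge0.
Qed.

Lemma bessel1 (R : realFieldType) n (d c : 'I_n -> R) (N : R) : 0 < N ->
  \sum_t c t ^+ 2 = N ->
  (\sum_t d t * c t) ^+ 2 <= N * \sum_t d t ^+ 2.
Proof.
move=> N0 hc.
set A := \sum_t d t * c t.
have h0 : 0 <= \sum_t (d t - (A / N) * c t) ^+ 2.
  by apply: sumr_ge0 => t _; apply: sqr_ge0.
have e : \sum_t (d t - (A / N) * c t) ^+ 2 =
  \sum_t d t ^+ 2 + (-2 * (A/N)) * A + (A/N)^+2 * \sum_t c t ^+ 2.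
  set a := A / N.
  rewrite /A !mulr_sumr -!big_split /=.
  by apply: eq_bigr => t _; ring.
rewrite e hc in h0.
have E : \sum_t d t ^+ 2 + (-2 * (A/N)) * A + (A/N)^+2 * N
   = (N * \sum_t d t ^+ 2 - A^+2) / N
  by field; rewrite gt_eqF.
rewrite E in h0.
rewrite pmulr_lge0 ?invr_gt0 // in h0.
by rewrite -subr_ge0.
Qed.
Lemma sumC (R : realType) n (F G : 'I_n -> R) :
  \sum_t Complex (F t) (G t) = Complex (\sum_t F t) (\sum_t G t).
Proof.
elim: n F G => [|n IH] F G; first by rewrite !big_ord0.
by rewrite !big_ord_recr IH.
Qed.

Lemma mulCC (R : realType) (a b c : R) :
  (a%:C * Complex b c)%C = Complex (a * b) (a * c).
Proof.
have -> : (a%:C * Complex b c)%C = Complex (a*b - 0*c) (a*c + 0*b) by [].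
by rewrite !mul0r subr0 addr0.
Qed.

Definition ang (R : realType) (n : nat) (t : nat) (f : nat) : R :=
  - (2 * pi * (t%:R) * (f%:R) / (n%:R)).

Lemma dftE (R : realType) n (x : 'I_n -> R) f :
  dft x f = Complex ((Num.sqrt (n%:R : R))^-1 * \sum_t x t * cos (ang R n t f))
                    ((Num.sqrt (n%:R : R))^-1 * \sum_t x t * sin (ang R n t f)).
Proof.
rewrite /dft /expj.
have -> : \sum_(t < n) (x t)%:C%C * Complex (cos (- (2 * pi * t%:R * f%:R / n%:R)))
   (sin (- (2 * pi * t%:R * f%:R / n%:R))) =
   \sum_(t < n) Complex (x t * cos (ang R n t f)) (x t * sin (ang R n t f)).
  apply: eq_bigr => t _ /=; rewrite /ang.
  by rewrite mulCC.
by rewrite sumC mulCC.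
Qed.

Lemma dft_sub (R : realType) n (x q : 'I_n -> R) f :
  let r := (Num.sqrt (n%:R : R))^-1 in
  let A := \sum_t (x t - q t) * cos (ang R n t f) in
  let B := \sum_t (x t - q t) * sin (ang R n t f) in
  [/\ dft x f - dft q f = Complex (r * A) (r * B),
      complex.Re (dft x f) - complex.Re (dft q f) = r * A &
      complex.Im (dft x f) - complex.Im (dft q f) = r * B].
Proof.
move=> r A B.
have eA : r * A = r * \sum_t x t * cos (ang R n t f) - r * \sum_t q t * cos (ang R n t f).
  by rewrite -mulrBr -sumrB /A; congr (_ * _); apply: eq_bigr => t _; rewrite mulrBl.
have eB : r * B = r * \sum_t x t * sin (ang R n t f) - r * \sum_t q t * sin (ang R n t f).
  by rewrite -mulrBr -sumrB /B; congr (_ * _); apply: eq_bigr => t _; rewrite mulrBl.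
rewrite !dftE /= eA eB; split => //.
Qed.

Lemma ang_sums (R : realType) n f : (0 < f)%N -> (f.*2 < n)%N ->
  [/\ \sum_(t < n) cos (ang R n t f) ^+ 2 = n%:R / 2,
      \sum_(t < n) sin (ang R n t f) ^+ 2 = n%:R / 2 &
      \sum_(t < n) cos (ang R n t f) * sin (ang R n t f) = 0].
Proof.
move=> f0 fn.
have n0 : (n%:R : R) != 0 by rewrite pnatr_eq0 -lt0n; apply: leq_ltn_trans fn.
have n0' : (0 : R) < n%:R by rewrite ltr0n lt0n -(pnatr_eq0 R).
set th : R := - (2 * pi * f%:R / n%:R).
set phi : R := 2 * th.
have eang : forall t : nat, ang R n t f = t%:R * th.
  by move=> t; rewrite /ang /th; ring.
have [hc hs] : \sum_(t<n) cos(t%:R*phi) = 0 /\ \sum_(t<n) sin(t%:R*phi) = 0.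
  apply: trig_sums.
  - have -> : phi / 2 = th by rewrite /phi; field.
    rewrite /th sinN oppr_eq0 gt_eqF //; apply: sin_gt0_pi.
    apply/andP; split.
      by rewrite divr_gt0 // mulr_gt0 ?ltr0n // mulr_gt0 ?pi_gt0.
    rewrite ltr_pdivrMr //.
    have h2 : (2 * f%:R : R) < n%:R by rewrite -natrM ltr_nat mul2n.
    have -> : 2 * (pi : R) * f%:R = (pi : R) * (2 * f%:R) by ring.
    by rewrite ltr_pM2l ?pi_gt0.
  - have -> : n%:R * phi = - ((pi *+ 2) *+ (f.*2)).
      rewrite /phi /th -[_ *+ f.*2]mulr_natr -[pi *+ 2]mulr_natr -muln2 natrM; field; exact: n0.
    by rewrite cosN -(add0r (_ *+ _)) (periodicn (@cosD2pi R)) cos0.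
  - have -> : n%:R * phi = - ((pi *+ 2) *+ (f.*2)).
      rewrite /phi /th -[_ *+ f.*2]mulr_natr -[pi *+ 2]mulr_natr -muln2 natrM; field; exact: n0.
    by rewrite sinN -(add0r (_ *+ _)) (periodicn (@sinD2pi R)) sin0 oppr0.
have ec : forall t : nat, cos (ang R n t f) ^+ 2 = (1 + cos (t%:R * phi)) / 2.
  move=> t; rewrite eang.
  have -> : t%:R * phi = (t%:R * th) *+ 2 by rewrite /phi mulr2n; ring.
  rewrite cos_mulr2n mulr2n; by field.
have ecs : forall t : nat, cos (ang R n t f) * sin (ang R n t f) = sin (t%:R * phi) / 2.
  move=> t; rewrite eang.
  have -> : t%:R * phi = (t%:R * th) *+ 2 by rewrite /phi mulr2n; ring.
  rewrite sin_mulr2n mulr2n; by field.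
have Sc : \sum_(t < n) cos (ang R n t f) ^+ 2 = n%:R / 2.
  under eq_bigr do rewrite ec.
  by rewrite -mulr_suml big_split /= hc addr0 sumr_const card_ord.
split => //.
  have -> : \sum_(t < n) sin (ang R n t f) ^+ 2 =
     \sum_(t < n) 1 - \sum_(t < n) cos (ang R n t f) ^+ 2.
    by rewrite -sumrB; apply: eq_bigr => t _; rewrite sin2cos2.
  by rewrite Sc sumr_const card_ord; field.
under eq_bigr do rewrite ecs.
by rewrite -mulr_suml hs mul0r.
Qed.

Lemma cmodE (R : realType) (a b : R) : cmod (Complex a b) = Num.sqrt (a ^+ 2 + b ^+ 2).
Proof. by []. Qed.

Lemma fin (R : realType) (a b S eps m : R) : 0 < m ->
  m * (a ^+ 2 + b ^+ 2) <= S -> Num.sqrt S < eps ->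
  [/\ Num.sqrt (a ^+ 2 + b ^+ 2) < eps / Num.sqrt m,
      `|a| < eps / Num.sqrt m & `|b| < eps / Num.sqrt m].
Proof.
move=> m0 hm hS.
have u0 : 0 <= a ^+ 2 + b ^+ 2 by rewrite addr_ge0 // sqr_ge0.
have S0 : 0 <= S by apply: le_trans hm; rewrite mulr_ge0 // ltW.
have sm : 0 < Num.sqrt m by rewrite sqrtr_gt0.
have main : Num.sqrt (a ^+ 2 + b ^+ 2) < eps / Num.sqrt m.
  rewrite ltr_pdivlMr // -sqrtrM // (le_lt_trans _ hS) // ler_sqrt //.
  by rewrite mulrC.
split => //.
  apply: le_lt_trans main; rewrite -sqrtr_sqr ler_sqrt // lerDl sqr_ge0 //.
apply: le_lt_trans main; rewrite -sqrtr_sqr ler_sqrt // lerDr sqr_ge0 //.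
Qed.

Theorem mainTheorem1 (R : realType) (n : nat) (x q : 'I_n -> R) (eps : R)
    (k : nat) :
  (3 <= n)%N -> 0 < eps -> (1 <= k)%N -> (k.*2 < n)%N ->
  eucl_dist x q < eps ->
  (* |X_0 - Q_0| < eps and |X_f - Q_f| < eps / sqrt 2 for f = 1..k *)
  (cmod (dft x 0 - dft q 0) < eps /\
   (forall f : nat, (1 <= f <= k)%N ->
      cmod (dft x f - dft q f) < eps / Num.sqrt 2)) /\
  (* box containment in the real coordinates of (X_0, ..., X_k) *)
  (`|complex.Re (dft x 0) - complex.Re (dft q 0) : R| < eps /\
   (forall f : nat, (1 <= f <= k)%N ->
      `|complex.Re (dft x f) - complex.Re (dft q f) : R| < eps / Num.sqrt 2 /\
      `|complex.Im (dft x f) - complex.Im (dft q f) : R| < eps / Num.sqrt 2)).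
Proof.
move=> n3 e0 k1 kn hd.
set S := \sum_(t < n) (x t - q t) ^+ 2.
have hS : Num.sqrt S < eps.
  move: hd; rewrite /eucl_dist /S.
  by rewrite (eq_bigr (fun t => (x t - q t) ^+ 2)) // => t _; rewrite real_normK ?num_real.
have n0' : (0 : R) < n%:R by rewrite ltr0n; apply: leq_trans n3.
set r := (Num.sqrt (n%:R : R))^-1.
have r2 : r ^+ 2 = (n%:R)^-1 by rewrite /r exprVn sqr_sqrtr // ltW.
have F : forall f : nat, (1 <= f <= k)%N ->
  [/\ cmod (dft x f - dft q f) < eps / Num.sqrt 2,
      `|complex.Re (dft x f) - complex.Re (dft q f) : R| < eps / Num.sqrt 2 &
      `|complex.Im (dft x f) - complex.Im (dft q f) : R| < eps / Num.sqrt 2].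
  move=> f /andP [f1 fk].
  have f2 : (f.*2 < n)%N by apply: leq_ltn_trans kn; rewrite leq_double.
  have [Sc Ss Scs] := @ang_sums R n f f1 f2.
  have [E1 E2 E3] := @dft_sub R n x q f.
  rewrite E1 E2 E3 cmodE.
  set A := \sum_t (x t - q t) * cos (ang R n t f).
  set B := \sum_t (x t - q t) * sin (ang R n t f).
  have hb : A ^+ 2 + B ^+ 2 <= n%:R / 2 * S.
    have N0 : (0:R) < n%:R / 2 by rewrite divr_gt0.
    exact: (@bessel2 R n (fun t => x t - q t) (fun t => cos (ang R n t f))
                    (fun t => sin (ang R n t f)) _ N0 Sc Ss Scs).
  have hm : 2 * ((r * A) ^+ 2 + (r * B) ^+ 2) <= S.
    have -> : 2 * ((r * A) ^+ 2 + (r * B) ^+ 2) = (2 / n%:R) * (A ^+ 2 + B ^+ 2).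
      by rewrite !exprMn r2; ring.
    apply: le_trans (ler_wpM2l _ hb) _.
      by rewrite divr_ge0 // ltW.
    have -> : 2 / n%:R * (n%:R / 2 * S) = S by field; rewrite gt_eqF.
    done.
  by have [] := @fin R _ _ _ _ _ (ltr0Sn _ 1) hm hS.
have [E1 E2 E3] := @dft_sub R n x q 0.
have ang0 : forall t : nat, ang R n t 0 = 0.
  by move=> t; rewrite /ang mulr0n mulr0 mul0r oppr0.
move: E1 E2 E3.
set A := \sum_t (x t - q t) * cos (ang R n t 0).
set B := \sum_t (x t - q t) * sin (ang R n t 0).
move=> E1 E2 E3.
have eB : B = 0 by rewrite /B big1 // => t _; rewrite ang0 sin0 mulr0.
have hc : \sum_(t < n) cos (ang R n t 0) ^+ 2 = n%:R.
  rewrite (eq_bigr (fun _ => 1)) => [|t _]; last by rewrite ang0 cos0 expr1n.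
  by rewrite sumr_const card_ord.
have hb : A ^+ 2 <= n%:R * S.
  exact: (@bessel1 R n (fun t => x t - q t) (fun t => cos (ang R n t 0)) _ n0' hc).
have hm : 1 * ((r * A) ^+ 2 + (r * B) ^+ 2) <= S.
  rewrite eB (mulr0 r) expr0n /= addr0 mul1r exprMn r2.
  by rewrite (ler_pdivrMl _ _ n0').
have [G1 G2 G3] := @fin R _ _ _ _ _ ltr01 hm hS.
rewrite sqrtr1 divr1 in G1 G2.
split; split.
- by rewrite E1 cmodE.
- by move=> f hf; have [] := F f hf.
- by rewrite E2.
- by move=> f hf; have [] := F f hf.
Qed.
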